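(* For any $n\in\mathbb{N}$, the monoid $\mathrm{rps}_n$ satisfies the identity $(xy)^{n+1}=(xy)^n yx$.
   Context: Let $\mathcal{A}_n=\{1<2<\cdots<n\}$. An rPS tableau is a finite (possibly empty) sequence of nonempty bottom-justified columns of boxes filled with positive integers, such that the entries of each column are weakly decreasing from top to bottom and the bottom entries of the columns form a strictly increasing sequence from left to right. Right insertion of a symbol $a$ into an rPS tableau $B$: if $a$ is strictly greater than every entry of the bottom row, append a new column consisting of $a$ at the right end; otherwise, let $z$ be the leftmost bottom-row entry with $z\geq a$ and put $a$ in a new box at the bottom of the column of $z$ (the previous entries of that column move up one box). For $w=w_1\cdots w_k$, $\mathfrak{R}_r(w)$ is obtained by starting with the empty tableau and right-inserting $w_1,\dots,w_k$ in order. The monoid $\mathrm{rps}_n$ is the quotient of $\mathcal{A}_n^*$ by the congruence $u\equiv v\iff\mathfrak{R}_r(u)=\mathfrak{R}_r(v)$. A monoid $M$ satisfies the identity $u(x,y)=v(x,y)$ if equality holds in $M$ for every substitution of elements of $M$ for the variables $x,y$. *)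

(* Defs.v *)
From mathcomp Require Import all_boot.
Set Implicit Arguments. Unset Strict Implicit. Unset Printing Implicit Defensive.

(* rPS tableaux: a tableau is a sequence of columns (left to right); each
   column is a nonempty sequence of entries listed from TOP to BOTTOM, so the
   bottom entry of a column is its last element. *)
Definition column := seq nat.
Definition rps_tableau := seq column.

Definition bottom (c : column) : nat := last 0 c.

Fixpoint rins (B : rps_tableau) (a : nat) : rps_tableau :=
  match B with
  | [::] => [:: [:: a]]
  | c :: B' =>
      if a <= bottom c then rcons c a :: B'
      else c :: rins B' a
  end.

Definition Rr (w : seq nat) : rps_tableau := foldl rins [::] w.

Definition word_over (n : nat) (w : seq nat) : bool :=
  all (fun a => (1 <= a) && (a <= n)) w.

(* Congruence defining rps_n. *)
Definition rps_equiv (u v : seq nat) : Prop := Rr u = Rr v.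

Definition wpow (w : seq nat) (k : nat) : seq nat := flatten (nseq k w).

(* Main.v *)
Require Import Defs.
From mathcomp Require Import all_boot.
Set Implicit Arguments. Unset Strict Implicit.

Definition bots (B : rps_tableau) := map bottom B.

Lemma bottom_rcons c a : bottom (rcons c a) = a.
Proof. by rewrite /bottom last_rcons. Qed.

Lemma rins_in B a : a \in bots (rins B a).
Proof.
elim: B => [|c B IH] /=; first by rewrite inE.
case: ifP => _ /=; first by rewrite bottom_rcons inE eqxx.
by rewrite inE IH orbT.
Qed.

Lemma rins_sub B a : {subset bots (rins B a) <= a :: bots B}.
Proof.
elim: B => [|c B IH] /= x; first by [].
case: ifP => _ /=; rewrite !inE ?bottom_rcons.
  by case/orP=> ->; rewrite ?orbT.
case/orP=> [->|/IH]; first by rewrite orbT.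
by rewrite inE; case/orP=> ->; rewrite ?orbT.
Qed.

Lemma rins_sorted B a : sorted ltn (bots B) -> sorted ltn (bots (rins B a)).
Proof.
elim: B => [|c B IH] //=.
rewrite !(path_sortedE ltn_trans) => /andP[Hall Hs].
case: ifP => Ha /=; rewrite ?bottom_rcons (path_sortedE ltn_trans) ?Hs ?andbT.
  apply/allP=> x Hx; move/allP: Hall => /(_ x Hx); apply: leq_trans; by [].
rewrite IH // andbT; apply/allP=> x /rins_sub; rewrite inE.
case/orP=> [/eqP->|Hx]; first by rewrite ltnNge Ha.
by move/allP: Hall => /(_ x Hx).
Qed.

Lemma rins_lt B a x : x \in bots B -> x < a -> x \in bots (rins B a).
Proof.
elim: B => [|c B IH] //=; rewrite inE => Hx Hxa.
case: ifP => Ha /=; rewrite inE ?bottom_rcons.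
  case/orP: Hx => [/eqP Hx|->]; last by rewrite orbT.
  by move: Hxa; rewrite Hx ltnNge Ha.
by case/orP: Hx => [->|/IH/(_ Hxa) ->]; rewrite ?orbT.
Qed.

Lemma rins_fixb B a : sorted ltn (bots B) -> a \in bots B -> bots (rins B a) = bots B.
Proof.
elim: B => [|c B IH] //=.
rewrite (path_sortedE ltn_trans) inE => /andP[Hall Hs] Ha.
case: ifP => Hle /=; rewrite ?bottom_rcons.
  case/orP: Ha => [/eqP->//|Ha]. 
  by move/allP: Hall => /(_ a Ha); rewrite ltnNge Hle.
case/orP: Ha => [/eqP Ha|Ha]; first by move: Hle; rewrite Ha leqnn.
by rewrite IH.
Qed.

Lemma rins_comm B a b : sorted ltn (bots B) -> a \in bots B -> b \in bots B ->
  rins (rins B a) b = rins (rins B b) a.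
Proof.
elim: B => [|c B IH] //=.
rewrite (path_sortedE ltn_trans) !inE => /andP[Hall Hs] Ha Hb.
have Eq : forall z, z \in bottom c :: bots B -> z <= bottom c -> z = bottom c.
  move=> z; rewrite inE; case/orP=> [/eqP//|Hz] Hle.
  by move/allP: Hall => /(_ z Hz); rewrite ltnNge Hle.
case: (leqP a (bottom c)) => Ha1; case: (leqP b (bottom c)) => Hb1 /=;
  rewrite ?bottom_rcons.
- by rewrite (Eq a) // (Eq b) // leqnn.
- rewrite (Eq a) // /= ?bottom_rcons leqnn /= leqNgt Hb1 /=.
  by [].
- rewrite (Eq b) // /= ?bottom_rcons leqnn /= leqNgt Ha1 /=.
  by [].
- rewrite ifN ?ifN ?(IH) // -?ltnNge //.
  + by case/orP: Ha => [/eqP E|//]; move: Ha1; rewrite E ltnn.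
  + by case/orP: Hb => [/eqP E|//]; move: Hb1; rewrite E ltnn.
Qed.

Definition Lk (w : seq nat) k B := forall b, b \in w -> b < k -> b \in bots B.

Lemma Lk_rins w k B a : sorted ltn (bots B) -> a \in w -> Lk w k B -> Lk w k (rins B a).
Proof.
move=> Hs Haw HL b Hbw Hbk.
have Hb := HL b Hbw Hbk.
case: (boolP (b \in bots (rins B a))) => // Hn.
case: (boolP (a \in bots B)) => Hab.
  by move: Hn; rewrite rins_fixb // Hb.
case: (ltngtP b a) => Hba.
- by move: Hn; rewrite rins_lt.
- by move: Hab; rewrite HL // (ltn_trans Hba Hbk).
- by move: Hn; rewrite Hba rins_in.
Qed.

Lemma pass w k u B : sorted ltn (bots B) -> {subset u <= w} -> Lk w k B ->
  [/\ sorted ltn (bots (foldl rins B u)), Lk w k (foldl rins B u) &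
      (k \in u -> Lk w k.+1 (foldl rins B u))].
Proof.
elim: u k B => [|a u IH] k B Hs Hu HL /=; first by split.
have Haw : a \in w by apply: Hu; rewrite inE eqxx.
have Hu' : {subset u <= w} by move=> z Hz; apply: Hu; rewrite inE Hz orbT.
have Hs' := @rins_sorted _ a Hs.
have HL' := Lk_rins Hs Haw HL.
have [H1 H2 H3] := IH _ _ Hs' Hu' HL'.
split=> //; rewrite inE; case/orP=> [/eqP Ek|]; last exact: H3.
subst a.
have HLk1 : Lk w k.+1 (rins B k).
  move=> b Hbw; rewrite ltnS leq_eqVlt; case/orP=> [/eqP->|]; first exact: rins_in.
  exact: HL'.
by have [_ H _] := IH _ _ Hs' Hu' HLk1.
Qed.

Lemma wpowS w j : wpow w j.+1 = w ++ wpow w j.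
Proof. by []. Qed.

Lemma wpow_comm w j : w ++ wpow w j = wpow w j ++ w.
Proof.
elim: j => [|j IH]; first by rewrite /wpow /= cats0.
rewrite wpowS. rewrite {1}IH. by rewrite catA.
Qed.

Lemma wpowSr w j : wpow w j.+1 = wpow w j ++ w.
Proof. by rewrite wpowS wpow_comm. Qed.

Lemma passes w n : all (fun a => (1 <= a) && (a <= n)) w -> forall j, j <= n ->
  sorted ltn (bots (Rr (wpow w j))) /\ Lk w j.+1 (Rr (wpow w j)).
Proof.
move=> Hw; elim=> [|j IH] Hj.
  split=> // b Hb; move/allP: Hw => /(_ b Hb) /andP[H1 _].
  by rewrite ltnS leqNgt H1.
have [Hs HL] := IH (ltnW Hj).
rewrite wpowSr /Rr foldl_cat -/(Rr _).
have HL' : Lk w j.+1 (Rr (wpow w j)) := HL.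
have [H1 H2 H3] := pass (u := w) Hs (fun z (h : z \in w) => h) HL'.
split=> //.
case: (boolP (j.+1 \in w)) => Hin; first exact: H3.
move=> b Hbw; rewrite ltnS leq_eqVlt; case/orP=> [/eqP Eb|]; last exact: H2.
by move: Hin; rewrite -Eb Hbw.
Qed.

Lemma fold_in B u : sorted ltn (bots B) -> all (fun a => a \in bots B) u ->
  bots (foldl rins B u) = bots B.
Proof.
elim: u B => [|a u IH] B //= Hs /andP[Ha Hu].
have E := rins_fixb Hs Ha.
by rewrite IH E // ?Hu // (@rins_sorted _ a Hs).
Qed.

Lemma fold_last B a u : sorted ltn (bots B) -> a \in bots B ->
  all (fun a => a \in bots B) u ->
  foldl rins B (a :: u) = foldl rins B (rcons u a).
Proof.
elim: u B => [|b u IH] B Hs Ha; first by [].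
move=> /= /andP[Hb Hu].
rewrite (rins_comm Hs Ha Hb).
have Hs' := @rins_sorted _ b Hs.
have E := rins_fixb Hs Hb.
apply: (IH (rins B b) Hs'); by rewrite E.
Qed.

Lemma fold_swap B u v : sorted ltn (bots B) -> all (fun a => a \in bots B) (u ++ v) ->
  foldl rins B (u ++ v) = foldl rins B (v ++ u).
Proof.
elim: u B v => [|a u IH] B v Hs; first by rewrite cats0.
rewrite /= => /andP[Ha Huv].
have Hs' := @rins_sorted _ a Hs.
have E := rins_fixb Hs Ha.
move: Huv; rewrite all_cat => /andP[Hu Hv].
rewrite IH ?E ?all_cat ?Hu ?Hv //.
have -> : foldl rins (rins B a) (v ++ u) = foldl rins B (a :: v ++ u) by [].
rewrite fold_last ?all_cat ?Hu ?Hv //.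
have Ev := fold_in Hs Hv.
rewrite foldl_cat fold_last ?Ev // -?foldl_cat.
  by rewrite -cats1 -catA cats1.
Qed.

Theorem proposition4p7 (n : nat) (x y : seq nat) :
  word_over n x -> word_over n y ->
  rps_equiv (wpow (x ++ y) n.+1) (wpow (x ++ y) n ++ (y ++ x)).
Proof.
move=> Hx Hy.
have Hw : all (fun a => (1 <= a) && (a <= n)) (x ++ y) by rewrite all_cat; apply/andP; split.
have [Hs HL] := passes Hw (leqnn n).
rewrite /rps_equiv wpowSr /Rr !foldl_cat.
move: Hs HL; rewrite /Rr; move: (foldl rins [::] _) => B0 Hs HL.
rewrite -(foldl_cat rins B0 x y) -(foldl_cat rins B0 y x) fold_swap //.
apply/allP=> b Hb; apply: HL => //.
by move/allP: Hw => /(_ b Hb) /andP[_]; rewrite ltnS.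
Qed.
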